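(* Let $n=2$ and $z=x+iy$ with $x,y\in\mathbb{R}$, $y\neq0$. Then $$\psi(x+iy)=\begin{cases}\frac83|y|, & x^2+y^2\le1 \text{ and } |x|\le\frac12,\\[2pt] \frac{|y|}{3|x|^3}, & (|x|-1)^2+y^2\le1 \text{ and } |x|>\frac12,\\[2pt] \frac{8|y|}{3(x^2+y^2)^3}, & (|x|-1)^2+y^2>1\text{ and } x^2+y^2>1.\end{cases}$$
   Context: For $n=2$ and $z\in\mathbb{C}\setminus\mathbb{R}$, $D_z$ is the set of $t\in\mathbb{R}$ with $|t|\le1$, $\left|z\,t\left(z-\frac{\Im z^{2}}{\Im z}\right)\right|\le 1$ and $\left|t\frac{\Im z^{2}}{\Im z}\right|\le 1$, and $$\psi(z)=\frac{1}{|\Im z|}\int_{D_z}\left|t\left(2z-\frac{\Im z^{2}}{\Im z}\right)\right|^2dt.$$ *)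

(* Defs.v *)
From Stdlib Require Import Reals.
Open Scope R_scope.

Record C := mkC { Re : R; Im : R }.
Definition Cmul (a b : C) : C :=
  mkC (Re a * Re b - Im a * Im b) (Re a * Im b + Im a * Re b).
Definition Csub (a b : C) : C := mkC (Re a - Re b) (Im a - Im b).
Definition Cscal (r : R) (a : C) : C := mkC (r * Re a) (r * Im a).
Definition RtoC (r : R) : C := mkC r 0.
Definition Cmod (a : C) : R := sqrt (Re a ^ 2 + Im a ^ 2).

Definition qz (z : C) : R := Im (Cmul z z) / Im z.

Definition inD (z : C) (t : R) : Prop :=
  Rabs t <= 1 /\
  Cmod (Cmul (Cscal t z) (Csub z (RtoC (qz z)))) <= 1 /\
  Rabs (t * qz z) <= 1.

Definition inD_dec (z : C) (t : R) : {inD z t} + {~ inD z t}.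
Proof.
  unfold inD.
  destruct (Rle_dec (Rabs t) 1) as [h1|h1]; [|right; tauto].
  destruct (Rle_dec (Cmod (Cmul (Cscal t z) (Csub z (RtoC (qz z))))) 1)
    as [h2|h2]; [|right; tauto].
  destruct (Rle_dec (Rabs (t * qz z)) 1) as [h3|h3]; [|right; tauto].
  left; tauto.
Defined.

(* integrand of psi, extended by 0 outside D_z; D_z is contained in [-1,1] *)
Definition psi_integrand (z : C) (t : R) : R :=
  if inD_dec z t
  then Cmod (Cscal t (Csub (Cscal 2 z) (RtoC (qz z)))) ^ 2
  else 0.

(* Main.v *)
Require Import Defs.
From Stdlib Require Import Reals Lra Psatz.
From Coquelicot Require Import Coquelicot.
Import Defs.
Open Scope R_scope.

Lemma integrand_val x y t : y <> 0 ->
  Cmod (Cscal t (Csub (Cscal 2 (mkC x y)) (RtoC (qz (mkC x y))))) ^ 2 = 4*y^2*t^2.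
Proof.
  intro hy. unfold Cmod, Cscal, Csub, RtoC, qz, Cmul; cbn [Defs.Re Defs.Im].
  replace ((x * y + y * x) / y) with (2*x) by (field; auto).
  rewrite pow2_sqrt; [ring|]. nra.
Qed.

Lemma cond_val x y t : y <> 0 ->
  Cmod (Cmul (Cscal t (mkC x y)) (Csub (mkC x y) (RtoC (qz (mkC x y))))) = Rabs t * (x^2+y^2).
Proof.
  intro hy. unfold Cmod, Cscal, Csub, RtoC, qz, Cmul; cbn [Defs.Re Defs.Im].
  replace ((x * y + y * x) / y) with (2*x) by (field; auto).
  replace ((t * x * (x - 2 * x) - t * y * (y - 0)) ^ 2 + (t * x * (y - 0) + t * y * (x - 2 * x)) ^ 2)
   with ((Rabs t * (x^2+y^2))^2).
  - rewrite sqrt_pow2; auto. apply Rmult_le_pos; [apply Rabs_pos|nra].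
  - rewrite Rpow_mult_distr, pow2_abs. ring.
Qed.

Lemma qz_val x y : y <> 0 -> qz (mkC x y) = 2*x.
Proof. intro hy. unfold qz, Cmul; cbn [Defs.Re Defs.Im]. field; auto. Qed.

Lemma inD_iff x y t : y <> 0 -> (inD (mkC x y) t <->
  Rabs t <= 1 /\ Rabs t * (x^2+y^2) <= 1 /\ Rabs t * (2*Rabs x) <= 1).
Proof.
  intro hy. unfold inD. rewrite cond_val, qz_val by auto.
  rewrite Rabs_mult, (Rabs_mult 2), (Rabs_right 2) by lra. tauto.
Qed.

Lemma key x y m : y <> 0 -> 0 <= m <= 1 ->
  (forall t, inD (mkC x y) t <-> Rabs t <= m) ->
  is_RInt (psi_integrand (mkC x y)) (-1) 1 (8*y^2*m^3/3).
Proof.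
  intros hy hm H.
  assert (Hin : forall t, Rabs t <= m -> psi_integrand (mkC x y) t = 4*y^2*t^2).
  { intros t ht. unfold psi_integrand. destruct inD_dec as [h|h].
    - apply integrand_val; auto.
    - exfalso; apply h, H; auto. }
  assert (Hout : forall t, m < Rabs t -> psi_integrand (mkC x y) t = 0).
  { intros t ht. unfold psi_integrand. destruct inD_dec as [h|h]; auto.
    apply H in h; lra. }
  assert (I1 : is_RInt (psi_integrand (mkC x y)) (-1) (-m) 0).
  { replace 0 with (scal (-m - -1) 0) by (unfold scal; simpl; unfold mult; simpl; ring).
    apply is_RInt_ext with (fun _ => 0). 2: apply (@is_RInt_const R_NormedModule).
    intros t ht. rewrite Rmin_left, Rmax_right in ht by lra.
    symmetry; apply Hout. rewrite Rabs_left; lra. }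
  assert (I3 : is_RInt (psi_integrand (mkC x y)) m 1 0).
  { replace 0 with (scal (1 - m) 0) by (unfold scal; simpl; unfold mult; simpl; ring).
    apply is_RInt_ext with (fun _ => 0). 2: apply (@is_RInt_const R_NormedModule).
    intros t ht. rewrite Rmin_left, Rmax_right in ht by lra.
    symmetry; apply Hout. rewrite Rabs_right; lra. }
  assert (I2 : is_RInt (psi_integrand (mkC x y)) (-m) m (8*y^2*m^3/3)).
  { apply is_RInt_ext with (fun t => 4*y^2*t^2).
    - intros t ht. rewrite Rmin_left, Rmax_right in ht by lra.
      symmetry; apply Hin. apply Rabs_le; lra.
    - replace (8*y^2*m^3/3) with (minus ((fun t => 4*y^2*t^3/3) m) ((fun t => 4*y^2*t^3/3) (-m))).
      + apply (@is_RInt_derive R_CompleteNormedModule (fun t => 4*y^2*t^3/3)).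
        * intros t _. auto_derive; auto. field.
        * intros t _. apply (@ex_derive_continuous R_AbsRing R_NormedModule). auto_derive; auto.
      + unfold minus, plus, opp; simpl. field. }
  pose proof (is_RInt_Chasles _ _ _ _ _ _ (is_RInt_Chasles _ _ _ _ _ _ I1 I2) I3) as R.
  replace (8*y^2*m^3/3) with (plus (plus 0 (8*y^2*m^3/3)) 0); auto.
  unfold plus; simpl; ring.
Qed.

Lemma abs_sq x : Rabs x ^ 2 = x ^ 2.
Proof. apply pow2_abs. Qed.

Lemma case1 x y : y <> 0 -> x^2+y^2 <= 1 -> Rabs x <= 1/2 ->
  is_RInt (psi_integrand (mkC x y)) (-1) 1 (8*y^2*1^3/3).
Proof.
  intros hy h1 h2. apply key; auto; [lra|].
  intro t. rewrite inD_iff by auto. pose proof (Rabs_pos t). pose proof (Rabs_pos x). split.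
  - tauto.
  - intro h; repeat split; nra.
Qed.

Lemma case2 x y : y <> 0 -> (Rabs x - 1)^2+y^2 <= 1 -> Rabs x > 1/2 ->
  is_RInt (psi_integrand (mkC x y)) (-1) 1 (8*y^2*(/(2*Rabs x))^3/3).
Proof.
  intros hy h1 h2. pose proof (Rabs_pos x). pose proof (abs_sq x).
  assert (hi : / (2*Rabs x) * (2*Rabs x) = 1) by (field; lra).
  assert (hp : 0 < / (2*Rabs x)) by (apply Rinv_0_lt_compat; lra).
  apply key; auto; [split; nra|].
  intro t. rewrite inD_iff by auto. pose proof (Rabs_pos t). split.
  - intros [_ [_ h]]. nra.
  - intro h; repeat split; nra.
Qed.

Lemma case3 x y : y <> 0 -> (Rabs x - 1)^2+y^2 > 1 -> x^2+y^2 > 1 ->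
  is_RInt (psi_integrand (mkC x y)) (-1) 1 (8*y^2*(/(x^2+y^2))^3/3).
Proof.
  intros hy h1 h2. pose proof (Rabs_pos x). pose proof (abs_sq x).
  assert (hi : / (x^2+y^2) * (x^2+y^2) = 1) by (field; lra).
  assert (hp : 0 < / (x^2+y^2)) by (apply Rinv_0_lt_compat; lra).
  apply key; auto; [split; nra|].
  intro t. rewrite inD_iff by auto. pose proof (Rabs_pos t). split.
  - intros [_ [h _]]. nra.
  - intro h; repeat split; nra.
Qed.

Theorem mainTheorem7 (x y : R) (hy : y <> 0) :
  exists pr : Riemann_integrable (psi_integrand (mkC x y)) (-1) 1,
    let psi := / Rabs y * RiemannInt pr in
    (x ^ 2 + y ^ 2 <= 1 -> Rabs x <= 1 / 2 -> psi = 8 / 3 * Rabs y) /\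
    ((Rabs x - 1) ^ 2 + y ^ 2 <= 1 -> Rabs x > 1 / 2 ->
       psi = Rabs y / (3 * Rabs x ^ 3)) /\
    ((Rabs x - 1) ^ 2 + y ^ 2 > 1 -> x ^ 2 + y ^ 2 > 1 ->
       psi = 8 * Rabs y / (3 * (x ^ 2 + y ^ 2) ^ 3)).
Proof.
  assert (ex : ex_RInt (psi_integrand (mkC x y)) (-1) 1).
  { pose proof (abs_sq x). pose proof (Rabs_pos x).
    destruct (Rle_dec ((Rabs x - 1) ^ 2 + y ^ 2) 1) as [a|a].
    - destruct (Rle_dec (Rabs x) (1/2)) as [b|b].
      + eexists; apply case1; auto; nra.
      + eexists; apply case2; auto; lra.
    - destruct (Rle_dec (x^2+y^2) 1) as [b|b].
      + eexists; apply case1; auto; nra.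
      + eexists; apply case3; auto; lra. }
  exists (ex_RInt_Reals_0 _ _ _ ex). intro psi.
  assert (hya : 0 < Rabs y) by (apply Rabs_pos_lt; auto).
  assert (hy2 : y^2 = Rabs y ^ 2) by (symmetry; apply abs_sq).
  unfold psi; rewrite <- RInt_Reals.
  split; [|split]; intros h1 h2.
  - rewrite (is_RInt_unique _ _ _ _ (case1 x y hy h1 h2)). rewrite hy2. field. lra.
  - rewrite (is_RInt_unique _ _ _ _ (case2 x y hy h1 h2)). rewrite hy2. field. lra.
  - rewrite (is_RInt_unique _ _ _ _ (case3 x y hy h1 h2)). rewrite hy2. field. lra.
Qed.
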